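(* Fix $\rho\in(0,1)$. The set of parameters $(\pi,\gamma)\in\Theta$ for which some optimal solution of the exploit LP satisfies (a) the fairness constraint $\alpha_{x,1}=\alpha_{x,0}$ for all $x$, respectively (b) the masking constraint $\sum_{x=1}^k\Pr(X=x)(\alpha_{x,1}-\alpha_{x,0})=0$, has Lebesgue measure zero in $\Theta$.
   Context: Fix an integer $k\ge 2$, $X\in\{1,\dots,k\}$, $P\in\{0,1\}$. The parameter space is $\Theta=\{(\pi,\gamma):\pi_{x,p}>0,\ \sum_{x,p}\pi_{x,p}=1,\ \gamma\in[0,1]^{2k}\}$ with Lebesgue measure, where $\pi_{x,p}=\Pr(X=x,P=p)$, $\Pr(X=x)=\pi_{x,0}+\pi_{x,1}$ and $\gamma_{x,p}=\mathbb{E}[Y\mid x,p]$. The exploit LP is: maximize $\mathcal{W}(\alpha)=\sum_{x,p}\gamma_{x,p}\alpha_{x,p}\pi_{x,p}$ over $\alpha\in[0,1]^{2k}$ subject to $\sum_{x,p}\alpha_{x,p}\pi_{x,p}=\rho$. *)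

(* Defs.v *)
From HB Require Import structures.
From mathcomp Require Import all_boot all_order all_algebra.
From mathcomp Require Import reals.
Set Implicit Arguments. Unset Strict Implicit. Unset Printing Implicit Defensive.
Import Order.TTheory GRing.Theory Num.Theory.
Local Open Scope ring_scope.

(* A cell (x,p): x : 'I_k encodes X = x+1 in {1,..,k}; p : bool encodes P
   (false = 0, true = 1). *)
Definition cell (k : nat) := ('I_k * bool)%type.

Definition Theta (R : realType) (k : nat) (pi gamma : cell k -> R) : Prop :=
  (forall c, 0 < pi c) /\ (\sum_(c : cell k) pi c = 1) /\
  (forall c, 0 <= gamma c <= 1).

Definition prX (R : realType) (k : nat) (pi : cell k -> R) (x : 'I_k) : R :=
  pi (x, false) + pi (x, true).

Definition W (R : realType) (k : nat) (pi gamma alpha : cell k -> R) : R :=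
  \sum_(c : cell k) gamma c * alpha c * pi c.

Definition lp_feasible (R : realType) (k : nat) (rho : R) (pi alpha : cell k -> R)
  : Prop :=
  (forall c, 0 <= alpha c <= 1) /\ (\sum_(c : cell k) alpha c * pi c = rho).

Definition lp_optimal (R : realType) (k : nat) (rho : R) (pi gamma alpha : cell k -> R)
  : Prop :=
  lp_feasible rho pi alpha /\
  forall beta, lp_feasible rho pi beta -> W pi gamma beta <= W pi gamma alpha.

Definition fair (R : realType) (k : nat) (alpha : cell k -> R) : Prop :=
  forall x : 'I_k, alpha (x, true) = alpha (x, false).

Definition masked (R : realType) (k : nat) (pi alpha : cell k -> R) : Prop :=
  \sum_(x < k) prX pi x * (alpha (x, true) - alpha (x, false)) = 0.

Definition lebesgue_null (R : realType) (J : finType) (S : (J -> R) -> Prop)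
  : Prop :=
  forall eps : R, 0 < eps ->
  exists a b : nat -> J -> R,
    (forall m j, a m j <= b m j) /\
    (forall v, S v -> exists m, forall j, a m j <= v j <= b m j) /\
    (forall N, \sum_(m < N) \prod_(j : J) (b m j - a m j) <= eps).

(* Lebesgue measure on Theta: Theta is (4k-1)-dimensional (pi lies on the
   simplex).  We use the affine chart that drops one coordinate c0 of pi;
   the resulting null sets do not depend on c0, and we require nullity in
   every such chart. *)
Definition chart (R : realType) (k : nat) (c0 : cell k) (pi gamma : cell k -> R)
  : ({c : cell k | c != c0} + cell k)%type -> R :=
  fun j => match j with inl c => pi (val c) | inr c => gamma c end.

Definition Theta_null (R : realType) (k : nat)
  (S : (cell k -> R) -> (cell k -> R) -> Prop) : Prop :=
  forall c0 : cell k,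
    lebesgue_null (fun v => exists pi gamma, S pi gamma /\ v = @chart R k c0 pi gamma).

(* Main.v *)
Require Import Defs.
From HB Require Import structures.
From mathcomp Require Import all_boot all_order all_algebra.
From mathcomp Require Import reals.
From mathcomp Require Import ring lra zify.
From Stdlib Require Import Classical ClassicalEpsilon FunctionalExtensionality.
Set Implicit Arguments. Unset Strict Implicit.
Import Order.TTheory GRing.Theory Num.Theory.
Local Open Scope ring_scope.
Lemma q_inj (a i b j : nat) : (2 ^ a * (2 * i + 1) = 2 ^ b * (2 * j + 1))%N -> a = b /\ i = j.
Proof.
elim: a b => [|a IH] [|b] /=.
- rewrite !expn0 !mul1n => h; split => //; lia.
- move=> /(congr1 odd); rewrite !oddM !oddX /= oddD oddM /=; by [].
- move=> /(congr1 odd); rewrite !oddM !oddX /= oddD oddM /=; by [].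
- rewrite !expnS -!mulnA => /eqP; rewrite eqn_pmul2l // => /eqP /IH [-> ->]; by [].
Qed.

Lemma q_bnd (n i : nat) : (n < 2 ^ n * (2 * i + 1))%N /\ (i < 2 ^ n * (2 * i + 1))%N.
Proof.
have h1 := ltn_expl n (isT : (1 < 2)%N).
have h2 : (0 < 2 ^ n)%N by rewrite expn_gt0.
move: h1 h2; move: (2 ^ n)%N => P h1 h2; split; nia.
Qed.
Section Null.
Variable R : realType.
Variable J : finType.
Variable j0 : J.
Implicit Types S : (J -> R) -> Prop.

Definition vol (a b : J -> R) := \prod_(j : J) (b j - a j).

Lemma vol_ge0 (a b : J -> R) : (forall j, a j <= b j) -> 0 <= vol a b.
Proof. move=> h; apply: prodr_ge0 => j _; rewrite subr_ge0; exact: h. Qed.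

Lemma vol0 : vol (fun _ => 0) (fun _ => 0) = 0.
Proof. by rewrite /vol (bigD1 j0) //= subrr mul0r. Qed.

Lemma null_sub S S' : (forall v, S v -> S' v) -> lebesgue_null S' -> lebesgue_null S.
Proof.
move=> sub h eps he; have [a [b [h1 [h2 h3]]]] := h eps he; exists a, b; split=> //; split=> //.
move=> v /sub; exact: h2.
Qed.

Lemma null_empty : lebesgue_null (fun _ : J -> R => False).
Proof.
move=> eps he; exists (fun _ _ => 0), (fun _ _ => 0); split=> //; split=> //.
move=> N; rewrite big1 ?ltW // => m _; exact: vol0.
Qed.

Lemma geom_sum (N : nat) : \sum_(n < N) ((2 ^ n.+1)%:R : R)^-1 = 1 - ((2 ^ N)%:R)^-1.
Proof.
elim: N => [|N IH]; first by rewrite big_ord0 expn0 invr1 subrr.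
rewrite big_ord_recr /= IH expnS natrM.
have h : ((2 ^ N)%:R : R) != 0 by rewrite pnatr_eq0 -lt0n expn_gt0.
by field.
Qed.

Lemma sum_ind (N a : nat) (V : R) : 0 <= V ->
  \sum_(m < N) (if (a == m)%N then V else 0) <= V.
Proof.
move=> hV; case: (ltnP a N) => ha.
  rewrite (bigD1 (Ordinal ha)) //= eqxx big1 ?addr0 // => m /eqP hm.
  case: eqP => // e; exfalso; apply: hm; apply: val_inj => /=; by rewrite e.
rewrite big1 // => m _; case: eqP => // e; exfalso; move: (ltn_ord m); rewrite -e; lia.
Qed.

Lemma null_count (S : nat -> (J -> R) -> Prop) :
  (forall n, lebesgue_null (S n)) -> lebesgue_null (fun v => exists n, S n v).
Proof.
move=> hS eps he.
have hc : forall n : nat, {ab : (nat -> J -> R) * (nat -> J -> R) |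
   (forall m j, ab.1 m j <= ab.2 m j) /\
   (forall v, S n v -> exists m, forall j, ab.1 m j <= v j <= ab.2 m j) /\
   (forall N, \sum_(m < N) vol (ab.1 m) (ab.2 m) <= eps / (2 ^ n.+1)%:R)}.
  move=> n; apply: constructive_indefinite_description.
  have he' : 0 < eps / (2 ^ n.+1)%:R by rewrite divr_gt0 // ltr0n expn_gt0.
  have [a [b h]] := hS n _ he'. by exists (a, b).
pose A n := (sval (hc n)).1. pose B n := (sval (hc n)).2.
have hAB n m j : A n m j <= B n m j by case: (svalP (hc n)) => h _; apply: h.
pose pk m := [pick x : 'I_m.+1 * 'I_m.+1 | (2 ^ x.1 * (2 * x.2 + 1) == m)%N].
pose a m := if pk m is Some x then A x.1 (x.2 : nat) else (fun _ : J => 0).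
pose b m := if pk m is Some x then B x.1 (x.2:nat) else (fun _ : J => 0).
exists a, b; split; [|split].
- move=> m j; rewrite /a /b; case: (pk m) => [x|] //.
- move=> v [n hv]. case: (svalP (hc n)) => _ [hcov _]. have [i hi] := hcov v hv.
  exists (2 ^ n * (2 * i + 1))%N.
  rewrite /a /b /pk. case: pickP => [x /eqP hx|].
  + have [e1 e2] := @q_inj _ _ _ _ hx. move=> j. rewrite e1 e2. exact: hi.
  + have [h1 h2] := q_bnd n i.
    have h1' : (n < (2 ^ n * (2 * i + 1)).+1)%N by apply: ltnW.
    have h2' : (i < (2 ^ n * (2 * i + 1)).+1)%N by apply: ltnW.
    move=> /(_ (Ordinal h1', Ordinal h2')) /=; by rewrite eqxx.
- move=> N.
  have vb (m : 'I_N) : vol (a m) (b m) <= \sum_(x : 'I_N * 'I_N)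
      (if (2 ^ x.1 * (2 * x.2 + 1) == m)%N then vol (A x.1 x.2) (B x.1 x.2) else 0).
    have hge (x : 'I_N * 'I_N) : 0 <= (if (2 ^ x.1 * (2 * x.2 + 1) == m)%N
                        then vol (A x.1 x.2) (B x.1 x.2) else 0).
      by case: ifP => // _; apply: vol_ge0.
    rewrite /a /b /pk; case: pickP => [x /eqP hx|_]; last by rewrite vol0; apply: sumr_ge0.
    have hx1 : (x.1 < N)%N by move: (ltn_ord x.1) (ltn_ord m); lia.
    have hx2 : (x.2 < N)%N by move: (ltn_ord x.2) (ltn_ord m); lia.
    rewrite (bigD1 (Ordinal hx1, Ordinal hx2)) //= hx eqxx lerDl.
    by apply: sumr_ge0 => y _.
  apply: (le_trans (ler_sum _ (fun m _ => vb m))).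
  rewrite exchange_big /=.
  apply: (@le_trans _ _ (\sum_(x : ('I_N * 'I_N)%type) vol (A x.1 x.2) (B x.1 x.2))).
    apply: ler_sum => x _; apply: sum_ind; exact: vol_ge0.
  rewrite -(pair_big predT predT (fun (n i : 'I_N) => vol (A n i) (B n i))) /=.
  apply: (@le_trans _ _ (\sum_(n < N) eps / (2 ^ n.+1)%:R)).
    apply: ler_sum => n _. case: (svalP (hc n)) => _ [_ h]; exact: h.
  rewrite -mulr_sumr geom_sum.
  rewrite -{2}(mulr1 eps) ler_pM2l // lerBlDr lerDl invr_ge0 ler0n //.
Qed.
End Null.
Section Null2.
Variable R : realType.
Variable J : finType.
Variable j0 : J.
Implicit Types S : (J -> R) -> Prop.

Lemma null_fin (I : finType) (F : I -> (J -> R) -> Prop) :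
  (forall i, lebesgue_null (F i)) -> lebesgue_null (fun v => exists i, F i v).
Proof.
move=> hF.
apply: (@null_sub R J _ (fun v => exists n, (fun n v => exists i, (enum_rank i : nat) = n /\ F i v) n v)).
  move=> v [i h]; exists (enum_rank i : nat), i; by [].
apply: (@null_count R J j0) => n.
case: (classic (exists i : I, (enum_rank i : nat) = n)) => [[i0 hi0]|hn].
  apply: (@null_sub R J _ (F i0)) => // v [i [hi hv]].
  have : enum_rank i = enum_rank i0 by apply: val_inj; rewrite /= hi hi0.
  by move/enum_rank_inj => <-.
apply: (@null_sub R J _ (fun _ => False)); last exact: (@null_empty R J j0).
move=> v [i [hi _]]; apply: hn; by exists i.
Qed.

Lemma null_union2 S1 S2 : lebesgue_null S1 -> lebesgue_null S2 ->
  lebesgue_null (fun v => S1 v \/ S2 v).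
Proof.
move=> h1 h2.
apply: (@null_sub R J _ (fun v => exists b : bool, (if b then S1 else S2) v)).
  by move=> v [h|h]; [exists true|exists false].
by apply: null_fin => -[].
Qed.

Lemma sum_tail (F : nat -> R) K N : (forall m, 0 <= F m) -> (forall m, (K <= m)%N -> F m = 0) ->
  \sum_(m < N) F m <= \sum_(m < K) F m.
Proof.
move=> h0 hF; rewrite -!(big_mkord xpredT).
case: (leqP N K) => h.
  rewrite (big_cat_nat (leq0n N) h) /= lerDl; by apply: sumr_ge0.
rewrite (big_cat_nat (leq0n K) (ltnW h)) /=.
have -> : \sum_(K <= i < N) F i = 0.
  rewrite big_nat_cond big1 // => m /andP[/andP[hm _] _]; exact: hF.
by rewrite addr0.
Qed.

Lemma cellP (n : nat) (x : R) : 0 <= x <= 1 ->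
  ((minn (Num.truncn (x * n.+1%:R)) n)%:R / n.+1%:R <= x) &&
  (x <= (minn (Num.truncn (x * n.+1%:R)) n).+1%:R / n.+1%:R).
Proof.
move=> /andP[x0 x1].
have hn : (0 : R) < n.+1%:R by rewrite ltr0n.
have /andP[t1 t2] := Num.Theory.truncn_itv (mulr_ge0 x0 (ltW hn)).
rewrite ler_pdivrMr // ler_pdivlMr //.
case: (leqP (Num.truncn (x * n.+1%:R)) n) => ht.
  rewrite t1 /=; exact: ltW.
have hh : (n.+1%:R : R) <= (Num.truncn (x * n.+1%:R))%:R by rewrite ler_nat.
apply/andP; split.
  apply: le_trans t1; apply: le_trans hh; by rewrite ler_nat.
by rewrite -{2}(mul1r n.+1%:R) ler_pM2r.
Qed.

Lemma null_lip S (L : R) : 0 <= L -> (forall v, S v -> forall j, 0 <= v j <= 1) ->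
  (forall v w, S v -> S w -> `|v j0 - w j0| <= L * \sum_(j | j != j0) `|v j - w j|) ->
  lebesgue_null S.
Proof.
move=> hL hbox hlip eps he.
pose n := Num.truncn (2 * L * #|J|%:R / eps).
pose d : R := (n.+1%:R)^-1.
have hn : (0 : R) < n.+1%:R by rewrite ltr0n.
have hd : 0 < d by rewrite invr_gt0.
pose h := L * #|J|%:R * d.
have hh : 0 <= h by rewrite /h mulr_ge0 ?(ltW hd) // mulr_ge0 // ler0n.
have h2h : 2 * h <= eps.
  have := Num.Theory.truncnS_gt (2 * L * #|J|%:R / eps); rewrite -/n => hn'.
  rewrite ltr_pdivrMr // in hn'.
  have -> : 2 * h = (2 * L * #|J|%:R) / n.+1%:R by rewrite /h /d !mulrA.
  rewrite ler_pdivrMr // [X in _ <= X]mulrC; exact: ltW.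
pose cl (x : R) : 'I_n.+1 := inord (minn (Num.truncn (x * n.+1%:R)) n).
have clP x : 0 <= x <= 1 -> ((cl x)%:R * d <= x) && (x <= (cl x).+1%:R * d).
  move=> hx; rewrite /cl inordK; first exact: cellP.
  by rewrite ltnS geq_minr.
pose G := {ffun J -> 'I_n.+1}.
pose good (g : G) v := S v /\ (forall j, j != j0 -> cl (v j) = g j).
pose rep (g : G) : option (J -> R) :=
  match excluded_middle_informative (exists v, good g v) with
  | left e => Some (proj1_sig (constructive_indefinite_description _ e))
  | right _ => None end.
have repP g v : rep g = Some v -> good g v.
  rewrite /rep; case: excluded_middle_informative => // e [<-].
  exact: (proj2_sig (constructive_indefinite_description _ e)).
have repS g w : good g w -> exists v, rep g = Some v.
  move=> gw; rewrite /rep; case: excluded_middle_informative => e; first by eexists.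
  by exfalso; apply: e; exists w.
pose aG (g : G) : J -> R := if (g j0 == ord0) then
    (if rep g is Some v then (fun j => if j == j0 then v j0 - h else (g j)%:R * d)
     else fun _ => 0) else fun _ => 0.
pose bG (g : G) : J -> R := if (g j0 == ord0) then
    (if rep g is Some v then (fun j => if j == j0 then v j0 + h else (g j).+1%:R * d)
     else fun _ => 0) else fun _ => 0.
have abG g j : aG g j <= bG g j.
  rewrite /aG /bG; case: ifP => // _; case: (rep g) => // v.
  case: ifP => _; last by rewrite ler_pM2r // ler_nat.
  lra.
pose K := #|G|.
pose a m : J -> R := if (insub m : option 'I_K) is Some i then aG (enum_val i) else fun _ => 0.
pose b m : J -> R := if (insub m : option 'I_K) is Some i then bG (enum_val i) else fun _ => 0.
exists a, b; split; [|split].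
- move=> m j; rewrite /a /b; case: (insub m) => //.
- move=> w hw.
  pose g : G := [ffun j => if j == j0 then ord0 else cl (w j)].
  have gw : good g w by split => // j hj; rewrite ffunE (negbTE hj).
  have [v hv] := repS g w gw.
  have gv := repP g v hv.
  have gj0 : g j0 = ord0 by rewrite ffunE eqxx.
  have close j : j != j0 -> `|w j - v j| <= d.
    move=> hj.
    have /andP[w1 w2] := clP _ (hbox w hw j).
    have /andP[v1 v2] := clP _ (hbox v gv.1 j).
    move: w1 w2 v1 v2; rewrite (gw.2 j hj) (gv.2 j hj) -[(g j).+1%:R]natr1 mulrDl mul1r => w1 w2 v1 v2.
    rewrite ler_norml; apply/andP; split; lra.
  exists (enum_rank g : nat).
  rewrite /a /b valK enum_rankK /aG /bG gj0 eqxx hv.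
  move=> j; case: (eqVneq j j0) => [->|hj].
    have hl := hlip w v hw gv.1.
    have hs : \sum_(j | j != j0) `|w j - v j| <= #|J|%:R * d.
      apply: (@le_trans _ _ (\sum_(j | j != j0) d)); first by apply: ler_sum => i hi; exact: close.
      apply: (@le_trans _ _ (\sum_(j : J) d)); last by rewrite sumr_const mulr_natl.
      rewrite [X in _ <= X](bigID (fun j => j != j0)) /= lerDl.
      apply: sumr_ge0 => ? _; exact: ltW.
    have : `|w j0 - v j0| <= h.
      apply: le_trans hl _; rewrite /h -mulrA; exact: ler_wpM2l.
    by rewrite ler_norml => /andP[e1 e2]; apply/andP; split; lra.
  have /andP[w1 w2] := clP _ (hbox w hw j).
  by rewrite -(gw.2 j hj) w1 w2.
- move=> N.
  pose f (j : J) (i : 'I_n.+1) : R := if j == j0 then (if i == ord0 then 2 * h else 0) else d.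
  have f0 j i : 0 <= f j i by rewrite /f; case: ifP => _; [case: ifP => _ //; lra | exact: ltW].
  pose F m : R := if (insub m : option 'I_K) is Some i then \prod_j f j (enum_val i j) else 0.
  have F0 m : 0 <= F m by rewrite /F; case: insub => // i; apply: prodr_ge0 => j _.
  have hv m : \prod_j (b m j - a m j) <= F m.
    rewrite /a /b /F; case: insub => [i|]; last by rewrite (bigD1 j0) //= subrr mul0r.
    rewrite /aG /bG; case: ifP => [/eqP e0|_]; last first.
      rewrite (bigD1 j0) //= subrr mul0r; by apply: prodr_ge0 => j _.
    case: (rep _) => [v|]; last first.
      rewrite (bigD1 j0) //= subrr mul0r; by apply: prodr_ge0 => j _.
    apply: ler_prod => j _; rewrite /f; case: (eqVneq j j0) => [->|hj].
      rewrite e0 eqxx; apply/andP; split; lra.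
    rewrite ?(negbTE hj).
    rewrite -natr1 mulrDl mul1r; apply/andP; split; last lra.
    rewrite subr_ge0 lerDl; exact: ltW.
  apply: (le_trans (ler_sum _ (fun (m : 'I_N) _ => hv m))).
  apply: (le_trans (@sum_tail F K N F0 _)).
    by move=> m hm; rewrite /F insubF // ltnNge hm.
  have -> : \sum_(m < K) F m = \sum_(i < K) \prod_j f j (enum_val i j).
    by apply: eq_bigr => i _; rewrite /F valK.
  rewrite -(big_enum_val (A := G) (fun g : G => \prod_j f j (g j))) /=.
  rewrite -bigA_distr_bigA /=.
  rewrite (bigD1 j0) //=.
  have -> : \prod_(j | j != j0) \sum_(i < n.+1) f j i = 1.
    apply: big1 => j hj; rewrite /f (negbTE hj) sumr_const card_ord -mulr_natr /d mulVf //.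
    by rewrite pnatr_eq0.
  rewrite mulr1 /f eqxx (bigD1 ord0) //= big1 ?addr0 // => i /negbTE -> //.
Qed.
End Null2.
Section Quad.
Variable R : realType.
Variable J : finType.
Variable j0 : J.

Definition box01 (v : J -> R) := forall j, 0 <= v j <= 1.
Definition isAff (F : (J -> R) -> R) :=
  exists (l : J -> R) (e : R), forall v, F v = \sum_j l j * v j + e.
Definition isQuad (F : (J -> R) -> R) :=
  exists (q : J -> J -> R) (l : J -> R) (e : R),
    forall v, F v = \sum_i \sum_j q i j * v i * v j + \sum_j l j * v j + e.

Lemma aff_const c : isAff (fun _ => c).
Proof. exists (fun _ => 0), c => v; by rewrite big1 ?add0r // => j _; rewrite mul0r. Qed.

Lemma aff_coord k : isAff (fun v => v k).
Proof.
exists (fun j => if j == k then 1 else 0), 0 => v.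
rewrite addr0 (bigD1 k) //= eqxx mul1r big1 ?addr0 // => j /negbTE ->; by rewrite mul0r.
Qed.

Lemma aff_add (F G : (J -> R) -> R) : isAff F -> isAff G -> isAff (fun v => F v + G v).
Proof.
move=> [l [e hF]] [l' [e' hG]]; exists (fun j => l j + l' j), (e + e') => v.
rewrite hF hG.
have -> : \sum_j (l j + l' j) * v j = \sum_j l j * v j + \sum_j l' j * v j.
  by rewrite -big_split; apply: eq_bigr => j _; rewrite mulrDl.
lra.
Qed.

Lemma aff_scale c F : isAff F -> isAff (fun v => c * F v).
Proof.
move=> [l [e hF]]; exists (fun j => c * l j), (c * e) => v.
rewrite hF mulrDr mulr_sumr; congr (_ + _); apply: eq_bigr => j _; by rewrite mulrA.
Qed.

Lemma aff_sub F G : isAff F -> isAff G -> isAff (fun v => F v - G v).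
Proof.
move=> hF hG.
have e : (fun v => F v - G v) = (fun v => F v + -1 * G v).
  by apply: functional_extensionality => v; rewrite mulN1r.
rewrite e; exact: aff_add hF (aff_scale (-1) hG).
Qed.

Lemma aff_sum (I : finType) (P : pred I) (F : I -> (J -> R) -> R) :
  (forall i, isAff (F i)) -> isAff (fun v => \sum_(i | P i) F i v).
Proof.
move=> hF.
have hc : forall i, {le : (J -> R) * R | forall v, F i v = \sum_j le.1 j * v j + le.2}.
  move=> i; apply: constructive_indefinite_description.
  have [l [e h]] := hF i; by exists (l, e).
exists (fun j => \sum_(i | P i) (sval (hc i)).1 j * 1), (\sum_(i | P i) (sval (hc i)).2) => v.
rewrite (eq_bigr (fun i => \sum_j (sval (hc i)).1 j * v j + (sval (hc i)).2)); last first.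
  by move=> i _; exact: (svalP (hc i)).
rewrite big_split /=; congr (_ + _).
rewrite exchange_big /=; apply: eq_bigr => j _; rewrite mulr_suml; apply: eq_bigr => i _.
by rewrite mulr1.
Qed.

Lemma quad_aff F : isAff F -> isQuad F.
Proof.
move=> [l [e hF]]; exists (fun _ _ => 0), l, e => v.
rewrite hF.
have -> : \sum_i \sum_j (fun _ _ => 0 : R) i j * v i * v j = 0.
  by apply: big1 => i _; apply: big1 => j _; rewrite !mul0r.
by rewrite add0r.
Qed.

Lemma quad_add F G : isQuad F -> isQuad G -> isQuad (fun v => F v + G v).
Proof.
move=> [q [l [e hF]]] [q' [l' [e' hG]]].
exists (fun i j => q i j + q' i j), (fun j => l j + l' j), (e + e') => v.
rewrite hF hG.
have -> : \sum_j (l j + l' j) * v j = \sum_j l j * v j + \sum_j l' j * v j.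
  by rewrite -big_split; apply: eq_bigr => j _; rewrite mulrDl.
have -> : \sum_i \sum_j (q i j + q' i j) * v i * v j =
   \sum_i \sum_j q i j * v i * v j + \sum_i \sum_j q' i j * v i * v j.
  rewrite -big_split; apply: eq_bigr => i _.
  by rewrite -big_split; apply: eq_bigr => j _; rewrite !mulrDl.
lra.
Qed.

Lemma quad_mul F G : isAff F -> isAff G -> isQuad (fun v => F v * G v).
Proof.
move=> [l [e hF]] [m [f hG]].
exists (fun i j => l i * m j), (fun j => e * m j + f * l j), (e * f) => v.
rewrite hF hG.
have e1 : (\sum_j l j * v j) * (\sum_j m j * v j) = \sum_i \sum_j l i * m j * v i * v j.
  rewrite mulr_suml; apply: eq_bigr => i _; rewrite mulr_sumr; apply: eq_bigr => j _.
  by rewrite mulrACA -[RHS]mulrA.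
have e2 : \sum_j (e * m j + f * l j) * v j = e * (\sum_j m j * v j) + f * (\sum_j l j * v j).
  rewrite !mulr_sumr -big_split; apply: eq_bigr => j _; by rewrite mulrDl !mulrA.
rewrite e2 -e1.
set X := \sum_j l j * v j; set Y := \sum_j m j * v j.
rewrite mulrDl !mulrDr; lra.
Qed.

Lemma klip (c h : J -> R) (i : J) (mu B : R) : 0 < mu -> mu <= `|c i| ->
  (forall j, `|c j| <= B) -> \sum_j c j * h j = 0 ->
  `|h i| <= B / mu * \sum_(j | j != i) `|h j|.
Proof.
move=> hmu hci hB hs.
have e : c i * h i = - \sum_(j | j != i) c j * h j.
  by move: hs; rewrite (bigD1 i) //=; lra.
have h1 : `|c i| * `|h i| <= B * \sum_(j | j != i) `|h j|.
  rewrite -normrM e normrN mulr_sumr.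
  apply: (le_trans (ler_norm_sum _ _ _)); apply: ler_sum => j _.
  by rewrite normrM ler_wpM2r.
rewrite mulrAC ler_pdivlMr // mulrC.
apply: le_trans h1; by rewrite ler_wpM2r.
Qed.
End Quad.
Section QN.
Variable R : realType.
Variable J : finType.
Variable j0 : J.

Lemma quad_null (F : (J -> R) -> R) : isQuad F -> (exists v0, F v0 != 0) ->
  lebesgue_null (fun v => box01 v /\ F v = 0).
Proof.
move=> [q [l [e hF]]] [v0 hv0].
pose c i j := q i j + q j i.
pose g j (v : J -> R) := \sum_i c i j * v i + l j.
pose mid (v w : J -> R) := fun i => (v i + w i) / 2.
have key v w : F v - F w = \sum_j g j (mid v w) * (v j - w j).
  rewrite !hF.
  have e1 : \sum_i \sum_j q i j * v i * v j - \sum_i \sum_j q i j * w i * w j =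
     \sum_j \sum_i c i j * mid v w i * (v j - w j).
    rewrite -sumrB.
    transitivity (\sum_i (\sum_j q i j * mid v w i * (v j - w j) +
                          \sum_j q i j * (v i - w i) * mid v w j)).
      apply: eq_bigr => i _; rewrite -sumrB -big_split; apply: eq_bigr => j _.
      by rewrite /mid /=; field.
    rewrite big_split /= exchange_big /=.
    have -> : \sum_j \sum_i c i j * mid v w i * (v j - w j) =
       \sum_j \sum_i q i j * mid v w i * (v j - w j) +
       \sum_j \sum_i q j i * (v j - w j) * mid v w i.
      rewrite -big_split; apply: eq_bigr => j _; rewrite -big_split; apply: eq_bigr => i _.
      rewrite /c /mid /=; ring.
    by [].
  have e2 : \sum_j l j * v j - \sum_j l j * w j = \sum_j l j * (v j - w j).
    by rewrite -sumrB; apply: eq_bigr => j _; rewrite mulrBr.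
  have e3 : \sum_j g j (mid v w) * (v j - w j) =
     \sum_j \sum_i c i j * mid v w i * (v j - w j) + \sum_j l j * (v j - w j).
    rewrite -big_split; apply: eq_bigr => j _; rewrite /g mulrDl mulr_suml; congr (_ + _).
  rewrite e3 -e1 -e2; lra.
have gmid j v w : g j (mid v w) = (g j v + g j w) / 2.
  rewrite /g /mid.
  have -> : \sum_i c i j * ((v i + w i) / 2) = (\sum_i c i j * v i + \sum_i c i j * w i) / 2.
    by rewrite -big_split mulr_suml; apply: eq_bigr => i _; rewrite /c /=; field.
  by field.
have midbox v w : box01 v -> box01 w -> box01 (mid v w).
  move=> hv hw i; have := hv i; have := hw i; rewrite /mid => /andP[? ?] /andP[? ?].
  apply/andP; split; lra.
pose K := \sum_j (\sum_i `|c i j| + `|l j|).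
have Kj j : \sum_i `|c i j| + `|l j| <= K.
  rewrite /K [X in _ <= X](bigD1 j) //= lerDl; apply: sumr_ge0 => j' _.
  apply: addr_ge0 => //; exact: sumr_ge0.
have gbnd j v : box01 v -> `|g j v| <= K.
  move=> hv; apply: le_trans (Kj j); apply: (le_trans (ler_normD _ _)); rewrite lerD2r.
  apply: (le_trans (ler_norm_sum _ _ _)); apply: ler_sum => i _.
  rewrite normrM; have /andP[h1 h2] := hv i.
  rewrite -[X in _ <= X]mulr1; apply: ler_wpM2l => //.
  by rewrite ger0_norm.
have K0 : 0 <= K by apply: le_trans (gbnd j0 (fun _ => 0) _) => //; move=> i; rewrite lexx ler01.
pose P (jb : J * bool) (n : nat) (v : J -> R) := box01 v /\ F v = 0 /\
   (n.+1%:R)^-1 <= (if jb.2 then g jb.1 v else - g jb.1 v).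
pose S0 v := box01 v /\ F v = 0 /\ forall j, g j v = 0.
apply: (@null_sub R J _ (fun v => S0 v \/ (exists jb : J * bool, exists n, P jb n v))).
  move=> v [hb hv]; case: (classic (forall j, g j v = 0)) => hg; first by left.
  right; have [j hj] := not_all_ex_not _ _ hg.
  pose t := if 0 < g j v then g j v else - g j v.
  have t0 : 0 < t.
    rewrite /t; case: ifP => // /negbT; rewrite -leNgt => hle; rewrite oppr_gt0 lt_neqAle hle andbT.
    by apply/eqP.
  exists (j, 0 < g j v), (Num.truncn t^-1); split => //; split => //.
  have := Num.Theory.truncnS_gt (t^-1); move: (Num.truncn t^-1) => N hN.
  rewrite /= -/t.
  have hN0 : (0 : R) < N.+1%:R by rewrite ltr0n.
  rewrite -[t^-1]mul1r ltr_pdivrMr // in hN.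
  rewrite -[(N.+1%:R)^-1]mul1r ler_pdivrMr //; rewrite mulrC; exact: ltW.
apply: null_union2 => //.
  case: (classic (exists i j, c i j != 0)) => [[i [j hc]]|hno].
    apply: (@null_sub R J _ (fun v => box01 v /\ g j v = 0)).
      by move=> v [hb [_ hg]]; split.
    pose B := \sum_i' `|c i' j|.
    apply: (@null_lip R J i _ (B / `|c i j|)).
    - by apply: divr_ge0 => //; apply: sumr_ge0.
    - by move=> v [].
    move=> v w [_ hv] [_ hw].
    apply: (@klip R J (fun i' => c i' j)) => //.
    - by rewrite normr_gt0.
    - by move=> i'; rewrite /B (bigD1 i') //= lerDl; apply: sumr_ge0.
    move: hv hw; rewrite /g => hv hw.
    have -> : \sum_i' c i' j * (v i' - w i') = \sum_i' c i' j * v i' - \sum_i' c i' j * w i'.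
      by rewrite -sumrB; apply: eq_bigr => i' _; rewrite mulrBr.
    lra.
  apply: (@null_sub R J _ (fun _ => False)); last exact: (@null_empty R J j0).
  move=> v [hb [hv hg]].
  have c0 i j : c i j = 0.
    case: (eqVneq (c i j) 0) => // hc; exfalso; apply: hno; by exists i, j.
  have gl j x : g j x = l j.
    by rewrite /g big1 ?add0r // => i _; rewrite c0 mul0r.
  have := key v v0; rewrite hv big1.
    move=> h; move: hv0; have -> : F v0 = 0 by lra.
    by rewrite eqxx.
  move=> j _; by rewrite gl -(gl j v) hg mul0r.
apply: (@null_fin R J j0) => jb; apply: (@null_count R J j0) => n.
apply: (@null_lip R J jb.1 _ (K / (n.+1%:R)^-1)).
- by apply: divr_ge0 => //; rewrite invr_ge0 ler0n.
- by move=> v [].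
move=> v w [hbv [hv hgv]] [hbw [hw hgw]].
clearbody g mid K P.
have hN0 : (0 : R) < (n.+1%:R)^-1 by rewrite invr_gt0 ltr0n.
apply: (@klip R J (fun j => g j (mid v w))) => //.
- rewrite gmid; move: hgv hgw; case: jb.2 => hgv hgw;
    move: (n.+1%:R^-1 : R) (g jb.1 v) (g jb.1 w) hN0 hgv hgw => mu a b h0 ha hb;
    [rewrite ger0_norm | rewrite ler0_norm]; lra.
- by move=> j; apply: gbnd; apply: midbox.
by rewrite -key hv hw subrr.
Qed.
End QN.
Section Ext.
Variable R : realType.
Variable J : finType.

Lemma aff_ext (F G : (J -> R) -> R) : (forall v, F v = G v) -> isAff G -> isAff F.
Proof. move=> e [l [c h]]; exists l, c => v; by rewrite e h. Qed.

Lemma quad_ext (F G : (J -> R) -> R) : (forall v, F v = G v) -> isQuad G -> isQuad F.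
Proof. move=> e [q [l [c h]]]; exists q, l, c => v; by rewrite e h. Qed.

Lemma quad_sum_seq (I : Type) (r : seq I) (P : pred I) (F : I -> (J -> R) -> R) :
  (forall i, isQuad (F i)) -> isQuad (fun v => \sum_(i <- r | P i) F i v).
Proof.
move=> hF; elim: r => [|i r IH].
  apply: (quad_ext (G := fun _ => 0)); first by move=> v; rewrite big_nil.
  exact: quad_aff (aff_const _ _).
case hP: (P i).
  apply: (quad_ext (G := fun v => F i v + \sum_(j <- r | P j) F j v)).
    by move=> v; rewrite big_cons hP.
  exact: quad_add.
apply: (quad_ext (G := fun v => \sum_(j <- r | P j) F j v)) => //.
by move=> v; rewrite big_cons hP.
Qed.
End Ext.

Section LP.
Variable R : realType.
Variable k : nat.
Variable rho : R.
Implicit Types pi gamma alpha : cell k -> R.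

Lemma sum2 (T : finType) (f g : T -> R) (c d : T) : c != d ->
  (forall e, e != c -> e != d -> f e = g e) ->
  \sum_e f e = \sum_e g e + (f c - g c) + (f d - g d).
Proof.
move=> hcd h.
rewrite (bigD1 c) // [X in _ = X + _ + _](bigD1 c) //=.
rewrite (bigD1 d) 1?eq_sym //= [X in _ = _ + X + _ + _](bigD1 d) 1?eq_sym //=.
have -> : \sum_(i | (i != c) && (i != d)) f i = \sum_(i | (i != c) && (i != d)) g i.
  by apply: eq_bigr => e /andP[h1 h2]; exact: h.
lra.
Qed.

Lemma exch pi gamma alpha c d : (forall e, 0 < pi e) -> lp_optimal rho pi gamma alpha ->
  gamma d < gamma c -> alpha c = 1 \/ alpha d = 0.
Proof.
move=> hpi [[hb hs] hopt] hg.
case: (classic (alpha c = 1 \/ alpha d = 0)) => // hn; exfalso.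
have hc1 : alpha c < 1.
  have /andP[_ h] := hb c; rewrite lt_neqAle h andbT; apply/eqP => e; apply: hn; by left.
have hd0 : 0 < alpha d.
  have /andP[h _] := hb d; rewrite lt_neqAle h andbT; apply/eqP => e; apply: hn; by right.
have hcd : c != d by apply/eqP => e; move: hg; rewrite e ltxx.
pose t := Num.min ((1 - alpha c) * pi c) (alpha d * pi d).
have hpc := hpi c; have hpd := hpi d.
have t0 : 0 < t by rewrite /t lt_min; apply/andP; split; apply: mulr_gt0 => //; rewrite subr_gt0.
have t1 : t <= (1 - alpha c) * pi c by rewrite /t ge_min lexx.
have t2 : t <= alpha d * pi d by rewrite /t ge_min lexx orbT.
pose beta e := if e == c then alpha c + t / pi c else if e == d then alpha d - t / pi d else alpha e.
have tc : t / pi c <= 1 - alpha c by rewrite ler_pdivrMr.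
have td : t / pi d <= alpha d by rewrite ler_pdivrMr.
have tc0 : 0 < t / pi c by apply: divr_gt0.
have td0 : 0 < t / pi d by apply: divr_gt0.
have /andP[ac0 ac1] := hb c; have /andP[ad0 ad1] := hb d.
have hfeas : lp_feasible rho pi beta.
  split.
    move=> e; rewrite /beta; case: eqP => _; first by (apply/andP; split; lra).
    case: eqP => _; last exact: hb.
    apply/andP; split; lra.
  rewrite -hs (@sum2 _ (fun e => beta e * pi e) (fun e => alpha e * pi e) c d hcd).
    rewrite /beta eqxx (negbTE (_ : d != c)) 1?eq_sym // eqxx.
    rewrite mulrDl mulrBl !divfK ?gt_eqF //; lra.
  by move=> e h1 h2; rewrite /beta (negbTE h1) (negbTE h2).
have := hopt beta hfeas; rewrite /W.
rewrite (@sum2 _ (fun e => gamma e * beta e * pi e) (fun e => gamma e * alpha e * pi e) c d hcd).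
  rewrite /beta eqxx (negbTE (_ : d != c)) 1?eq_sym // eqxx.
  rewrite -!mulrA mulrDl mulrBl !divfK ?gt_eqF //.
  have : gamma d * t < gamma c * t by rewrite ltr_pM2r.
  lra.
by move=> e h1 h2; rewrite /beta (negbTE h1) (negbTE h2).
Qed.

Definition frac alpha c := 0 < alpha c < 1.

Lemma frac_uniq pi gamma alpha c d : (forall e, 0 < pi e) -> lp_optimal rho pi gamma alpha ->
  (forall c d, c != d -> gamma c != gamma d) -> frac alpha c -> frac alpha d -> c = d.
Proof.
move=> hpi hopt hdist /andP[c0 c1] /andP[d0 d1].
case: (eqVneq c d) => // hcd; exfalso.
have := hdist c d hcd; rewrite neq_lt => /orP[] h.
  have [] := exch hpi hopt h => e; [move: d1|move: c0]; rewrite e ltxx //.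
have [] := exch hpi hopt h => e; [move: c1|move: d0]; rewrite e ltxx //.
Qed.
End LP.
Section Main.
Variable R : realType.
Variable k : nat.
Variable rho : R.
Hypothesis hr0 : 0 < rho.
Hypothesis hr1 : rho < 1.

Definition gmf (T : {set cell k}) (cs : cell k) (p : cell k -> R) (c : cell k) : R :=
  if c == cs then rho - \sum_(c' in T :\ cs) p c' else (if c \in T then 1 else 0) * p cs.
Definition GGf T cs p := \sum_(x < k)
  (p (x, false) + p (x, true)) * (gmf T cs p (x, true) - gmf T cs p (x, false)).
Definition HHf (T : {set cell k}) (p : cell k -> R) := \sum_(c in T) p c - rho.

Lemma bad_struct pi gamma alpha : Theta pi gamma -> lp_optimal rho pi gamma alpha ->
  (fair alpha \/ masked pi alpha) ->
  (exists c d, c != d /\ gamma c = gamma d) \/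
  (exists T, HHf T pi = 0) \/
  (exists T cs, GGf T cs pi = 0).
Proof.
move=> [hpi [hsum hg]] hopt hfm.
case: (classic (exists c d, c != d /\ gamma c = gamma d)) => [h|hdist]; first by left.
have hd : forall c d, c != d -> gamma c != gamma d.
  move=> c d hcd; apply/eqP => e; apply: hdist; by exists c, d.
have hb := hopt.1.1; have hs := hopt.1.2.
pose T := [set c | alpha c == 1].
case: (classic (exists cs, frac alpha cs)) => [[cs hcs]|hnf].
  have other c : c != cs -> alpha c = if c \in T then 1 else 0.
    move=> hc; rewrite inE; case: eqP => // h1.
    have /andP[a0 a1] := hb c.
    case: (eqVneq (alpha c) 0) => // hne; exfalso.
    have : frac alpha c.
      by rewrite /frac lt_neqAle eq_sym hne a0 /= lt_neqAle a1 andbT; apply/eqP.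
    move=> hfc; move/negP: hc; apply; apply/eqP; exact: frac_uniq hpi hopt hd hfc hcs.
  have csT : cs \notin T.
    by rewrite inE; move: hcs => /andP[_ h]; rewrite lt_eqF.
  case: hfm => [hfair|hmask].
    exfalso.
    move: hcs other csT; case: cs => x b hcs other csT.
    have hne : (x, ~~ b) != (x, b) by rewrite xpair_eqE eqxx /=; case: b {hcs other csT}.
    have : frac alpha (x, ~~ b).
      by move: hcs; case: b {hne other csT}; rewrite /frac /= ?hfair // -hfair.
    move=> hf'; move/negP: hne; apply; apply/eqP; exact: frac_uniq hpi hopt hd hf' hcs.
  right; right; exists T, cs.
  have eT : \sum_(c' in T :\ cs) pi c' = \sum_(c | c != cs) alpha c * pi c.
    rewrite big_mkcond [RHS]big_mkcond; apply: eq_bigr => c _.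
    rewrite in_setD1; case: (eqVneq c cs) => [->|hc] //=.
    by rewrite (other c hc); case: (c \in T); rewrite ?mul1r ?mul0r.
  have hs' : alpha cs * pi cs + \sum_(c | c != cs) alpha c * pi c = rho.
    by move: hs; rewrite (bigD1 cs) //=.
  have gm c : gmf T cs pi c = pi cs * alpha c.
    rewrite /gmf; case: (eqVneq c cs) => [->|hc].
      rewrite eT; lra.
    by rewrite (other c hc) mulrC.
  rewrite /GGf (eq_bigr (fun x : 'I_k => pi cs * ((pi (x, false) + pi (x, true)) *
                      (alpha (x, true) - alpha (x, false))))).
    by rewrite -mulr_sumr; move: hmask; rewrite /masked /prX => ->; rewrite mulr0.
  by move=> x _; rewrite !gm; ring.
right; left; exists T.
rewrite /HHf; apply/eqP; rewrite subr_eq0; apply/eqP; rewrite -hs big_mkcond; apply: eq_bigr => c _.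
rewrite inE; case: eqP => [->|h]; first by rewrite mul1r.
have /andP[a0 a1] := hb c.
case: (eqVneq (alpha c) 0) => [->|hne]; first by rewrite mul0r.
exfalso; apply: hnf; exists c.
by rewrite /frac lt_neqAle eq_sym hne a0 /= lt_neqAle a1 andbT; apply/eqP.
Qed.
End Main.
Section Chart.
Variable R : realType.
Variable k : nat.
Variable rho : R.
Hypothesis hr0 : 0 < rho.
Hypothesis hr1 : rho < 1.
Variable c0 : cell k.

Local Notation J := ({c : cell k | c != c0} + cell k)%type.

Definition coordv (v : J -> R) (c : cell k) : R :=
  if (insub c : option {c : cell k | c != c0}) is Some c' then v (inl c') else 0.
Definition piv (v : J -> R) (c : cell k) : R :=
  if c == c0 then 1 - \sum_(c' | c' != c0) coordv v c' else coordv v c.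

Lemma coordv_chart pi gamma c : c != c0 -> coordv (@chart R k c0 pi gamma) c = pi c.
Proof.
move=> h; rewrite /coordv; case: insubP => [c' _ e|]; first by rewrite /= e.
by rewrite h.
Qed.

Lemma piv_chart pi gamma c : \sum_c pi c = 1 -> piv (@chart R k c0 pi gamma) c = pi c.
Proof.
move=> hs; rewrite /piv; case: (eqVneq c c0) => [->|h]; last exact: coordv_chart.
rewrite (eq_bigr (fun c => pi c)); last by move=> c' h'; exact: coordv_chart.
by move: hs; rewrite (bigD1 c0) //=; lra.
Qed.

Lemma coordv_aff c : isAff (fun v : J -> R => coordv v c).
Proof. rewrite /coordv; case: (insub c) => [c'|]; [exact: aff_coord | exact: aff_const]. Qed.

Lemma piv_aff c : isAff (fun v : J -> R => piv v c).
Proof.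
rewrite /piv; case: (c == c0); last exact: coordv_aff.
apply: aff_sub; first exact: aff_const.
apply: aff_sum => c'; exact: coordv_aff.
Qed.

Definition Idx := ((cell k * cell k) + ({set cell k} + ({set cell k} * cell k)))%type.
Definition Fi (i : Idx) : (J -> R) -> R :=
  match i with
  | inl cd => fun v => v (inr cd.1) - v (inr cd.2)
  | inr (inl T) => fun v => HHf rho T (piv v)
  | inr (inr Tc) => fun v => GGf rho Tc.1 Tc.2 (piv v)
  end.
Definition valid (i : Idx) : bool := if i is inl cd then cd.1 != cd.2 else true.
Definition Piece (i : Idx) (v : J -> R) := valid i /\ box01 v /\ Fi i v = 0.

Definition ind (a : cell k) (c : cell k) : R := if c == a then 1 else 0.
Lemma ind_sum a : \sum_c ind a c = 1.
Proof. by rewrite (bigD1 a) //= /ind eqxx big1 ?addr0 // => c /negbTE ->. Qed.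

Lemma gmf_aff T cs c : isAff (fun v : J -> R => gmf rho T cs (piv v) c).
Proof.
rewrite /gmf; case: (c == cs).
  apply: aff_sub; first exact: aff_const.
  apply: aff_sum => c'; exact: piv_aff.
exact: aff_scale (piv_aff cs).
Qed.

Lemma GG_quad T cs : isQuad (fun v : J -> R => GGf rho T cs (piv v)).
Proof.
rewrite /GGf; apply: quad_sum_seq => x.
apply: quad_mul; first by apply: aff_add; exact: piv_aff.
apply: aff_sub; exact: gmf_aff.
Qed.

Lemma piece_null i : lebesgue_null (Piece i).
Proof.
have j0 : J := inr c0.
case hv: (valid i).
  apply: (@null_sub R J _ (fun v => box01 v /\ Fi i v = 0)); first by move=> v [_ h].
  apply: (@quad_null R J j0).
  - case: i hv => [cd|[T|Tc]] hv /=.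
    + apply: quad_aff; apply: aff_sub; exact: aff_coord.
    + apply: quad_aff; apply: aff_sub; last exact: aff_const.
      apply: aff_sum => c; exact: piv_aff.
    + exact: GG_quad.
  - case: i hv => [[c d]|[T|[T cs]]] hv /=.
    + exists (@chart R k c0 (ind c0) (ind c)); rewrite /= /ind eqxx.
      by move: hv => /= /negbTE; rewrite eq_sym => ->; rewrite subr0 oner_eq0.
    + exists (@chart R k c0 (ind c0) (ind c0)).
      rewrite /HHf (eq_bigr (fun c => ind c0 c)); last by move=> c _; rewrite piv_chart // ind_sum.
      case hT: (c0 \in T).
        rewrite (bigD1 c0) //= /ind eqxx big1 ?addr0; last by move=> c /andP[_ /negbTE ->].
        rewrite subr_eq0; apply/eqP => e; move: hr1; rewrite -e ltxx //.
      rewrite big1 ?sub0r ?oppr_eq0; first by apply/eqP => e; move: hr0; rewrite e ltxx.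
      by move=> c hc; rewrite /ind; case: eqP => // e; move: hc; rewrite e hT.
    + exists (@chart R k c0 (ind cs) (ind c0)).
      have hp c : piv (@chart R k c0 (ind cs) (ind c0)) c = ind cs c by rewrite piv_chart // ind_sum.
      rewrite /GGf (eq_bigr (fun x : 'I_k => (ind cs (x, false) + ind cs (x, true)) *
         (gmf rho T cs (ind cs) (x, true) - gmf rho T cs (ind cs) (x, false)))); last first.
        move=> x _; rewrite !hp; congr (_ * (_ - _)); rewrite /gmf;
          by case: ifP => _; rewrite ?hp //; congr (_ - _); apply: eq_bigr => c _; rewrite hp.
      have hz : \sum_(c' in T :\ cs) ind cs c' = 0.
        by apply: big1 => c; rewrite in_setD1 /ind => /andP[/negbTE -> _].
      rewrite (bigD1 cs.1) //= big1 ?addr0; last first.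
        move=> x hx; rewrite /ind.
        have h b : ((x, b) == cs) = false.
          by apply/negbTE/eqP => e; move: hx; rewrite -e eqxx.
        by rewrite !h add0r mul0r.
      clear hp; case: cs hz hv => x [] hz _; rewrite /gmf /ind /= !xpair_eqE eqxx /= hz ?mul1r ?add0r ?addr0 mul1r;
        case: (_ \in T); rewrite ?mul1r ?mul0r ?subr0 ?sub0r ?oppr_eq0 ?subr_eq0;
        apply/eqP => e; move: hr0 hr1; rewrite ?e; lra.
apply: (@null_sub R J _ (fun _ => False)); last exact: (@null_empty R J j0).
by move=> v [h _]; move: h; rewrite hv.
Qed.

Lemma chart_null (S : (cell k -> R) -> (cell k -> R) -> Prop) :
  (forall pi gamma, S pi gamma -> Theta pi gamma /\
     exists alpha, lp_optimal rho pi gamma alpha /\ (fair alpha \/ masked pi alpha)) ->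
  lebesgue_null (fun v => exists pi gamma, S pi gamma /\ v = @chart R k c0 pi gamma).
Proof.
move=> hS.
apply: (@null_sub R J _ (fun v => exists i, Piece i v)); last first.
  apply: (@null_fin R J (inr c0)) => i; exact: piece_null.
move=> v [pi [gamma [hpg ->]]].
have [hth [alpha [hopt hfm]]] := hS pi gamma hpg.
have [hpi [hsum hg]] := hth.
have hbox : box01 (@chart R k c0 pi gamma).
  move=> [c|c] /=; last exact: hg.
  have hpc := hpi (val c).
  apply/andP; split; first exact: ltW.
  move: hsum; rewrite (bigD1 (val c)) //= => e.
  have : 0 <= \sum_(i | i != val c) pi i by apply: sumr_ge0 => i _; exact: ltW.
  lra.
have hp : piv (@chart R k c0 pi gamma) = pi.
  by apply: functional_extensionality => c; exact: piv_chart.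
case: (bad_struct hth hopt hfm) => [[c [d [hcd e]]]|[[T hT]|[T [cs hT]]]].
- exists (inl (c, d)); split => //; split => //=; by rewrite e subrr.
- exists (inr (inl T)); split => //; split => //=; by rewrite hp.
- exists (inr (inr (T, cs))); split => //; split => //=; by rewrite hp.
Qed.
End Chart.

Theorem mainTheorem7 (R : realType) (k : nat) (hk : (2 <= k)%N)
  (rho : R) (hrho0 : 0 < rho) (hrho1 : rho < 1) :
  Theta_null (fun pi gamma : cell k -> R =>
    Theta pi gamma /\ exists alpha, lp_optimal rho pi gamma alpha /\ fair alpha)
  /\
  Theta_null (fun pi gamma : cell k -> R =>
    Theta pi gamma /\ exists alpha, lp_optimal rho pi gamma alpha /\ masked pi alpha).
Proof.
split => c0; apply: (chart_null hrho0 hrho1) => pi gamma [h [alpha [ho hf]]]; split => //;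
  exists alpha; split => //; by [left|right].
Qed.
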